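(* Let $G$ be a finite group with a normal subgroup $H\cong D_n$ such that $G/H\cong(\mathbb Z/2)^2$, and let $c_4>2$. Then there is no admissible homomorphism $f:T(2,2,2,c_4)\to G$ for cover type III-c, i.e. there is no surjective homomorphism $f:T(2,2,2,c_4)\to G$ such that $f(\gamma_1),f(\gamma_2),f(\gamma_3)$ have order $2$, $f(\gamma_4)$ has order $c_4$, $\pi_H(f(\gamma_i))\neq 1$ for $i=1,2,3$ and $\pi_H(f(\gamma_4))=1$.
   Context: $D_n=\langle x,y\mid x^n=y^2=1,\ yxy^{-1}=x^{-1}\rangle$. $T(2,2,2,c_4):=\langle\gamma_1,\dots,\gamma_4\mid \gamma_1\gamma_2\gamma_3\gamma_4=1,\ \gamma_1^2=\gamma_2^2=\gamma_3^2=\gamma_4^{c_4}=1\rangle$. $\pi_H:G\to G/H$ is the quotient map; the condition on $\pi_H\circ f$ expresses that $H$ corresponds to the genus zero $(\mathbb Z/2)^2$-cover of $\mathbb P^1$ branched at the first three of the four branch points with branching index 2. *)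

(* Defs.v *)
From mathcomp Require Import all_boot all_fingroup all_algebra.
Set Implicit Arguments. Unset Strict Implicit. Unset Printing Implicit Defensive.
Local Open Scope group_scope.

(* A homomorphism f : T(2,2,2,c4) -> G is the same as a choice of images
   g_i = f(gamma_i) in G satisfying the defining relations of T(2,2,2,c4)
   (universal property of the presentation). *)
Definition T222_hom_images (gT : finGroupType) (G : {set gT}) (c4 : nat)
    (g1 g2 g3 g4 : gT) : Prop :=
  [/\ [/\ g1 \in G, g2 \in G, g3 \in G & g4 \in G],
      g1 * g2 * g3 * g4 = 1,
      [/\ g1 ^+ 2 = 1, g2 ^+ 2 = 1 & g3 ^+ 2 = 1] & g4 ^+ c4 = 1].

Definition admissible_IIIc (gT : finGroupType) (G H : {set gT}) (c4 : nat)
    (g1 g2 g3 g4 : gT) : Prop :=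
  [/\ T222_hom_images G c4 g1 g2 g3 g4,
      <<[set g1; g2; g3; g4]>> = G,                    (* f surjective *)
      [/\ #[g1] = 2, #[g2] = 2, #[g3] = 2 & #[g4] = c4],
      [/\ coset H g1 != 1, coset H g2 != 1 & coset H g3 != 1]
    & coset H g4 = 1].

(* Main.v *)
Require Import Defs.
From mathcomp Require Import all_boot all_fingroup all_algebra.
From mathcomp Require Import cyclic.
Local Open Scope group_scope.

Lemma inv2 (gT : finGroupType) (z : gT) : z ^+ 2 = 1 -> z^-1 = z.
Proof. by move=> z2; apply/eqP; rewrite eq_invg_mul; move: z2; rewrite expgS expg1 => ->. Qed.

Theorem lemma5p9 (gT : finGroupType) (G H : {group gT}) (n c4 : nat) :
  H <| G ->
  H \isog Grp (x : y : x ^+ n, y ^+ 2, x ^ (y^-1) = x^-1) ->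
  G / H \isog [set: 'Z_2 * 'Z_2] ->
  2 < c4 ->
  ~ (exists g1 g2 g3 g4 : gT, admissible_IIIc G H c4 g1 g2 g3 g4).
Proof.
move=> nHG /isoGrp_hom presH isoQ c4gt2 [g1 [g2 [g3 [g4 adm]]]].
case/existsP: presH => -[x y] /=; rewrite !xpair_eqE /=.
case/and4P => /eqP defH /eqP xn /eqP y2 /eqP xy.
case: adm => [[[G1 G2 G3 G4] prod1 [g1sq g2sq g3sq] g4c] genG [o1 o2 o3 o4] [n1 n2 n3] c4H].
have yinv : y^-1 = y.
  by apply/eqP; rewrite eq_invg_mul; move: y2; rewrite expgS expg1 => ->.
have xyc : x ^ y = x^-1 by rewrite -yinv.
have Ny : <[y]> \subset 'N(<[x]>).
  rewrite cycle_subG inE -cycleJ cycle_subG xyc groupV cycle_id //.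
have key : forall h, h \in H -> h ^+ 2 != 1 -> h \in <[x]>.
  move=> h; rewrite -defH norm_joinEr // => /mulsgP[a b ax /cycleP[i ->] ->{h}].
  rewrite -(expg_mod i y2) modn2; case: (odd i); last by rewrite expg0 mulg1.
  case/cycleP: ax => k ->; rewrite expg1.
  have e : y * x ^+ k * y = x ^- k.
    by rewrite -{1}yinv -mulgA -conjgE conjXg xyc expVgn.
  by rewrite expgS expg1 -!mulgA (mulgA y) e mulgV eqxx.
have sHG := normal_sub nHG; have nHG' := normal_norm nHG.
have H4 : g4 \in H := coset_idr (subsetP nHG' _ G4) c4H.
have g4sq : g4 ^+ 2 != 1.
  by rewrite -order_dvdn o4; apply/negP => /(@dvdn_leq _ 2 isT); rewrite leqNgt c4gt2.
have R4 : g4 \in <[x]> := key _ H4 g4sq.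
have x2 : x ^+ 2 != 1.
  apply/eqP => x2; case/cycleP: R4 g4sq => k ->.
  by rewrite -expgM mulnC expgM x2 expg1n eqxx.
have xH : x \in H by rewrite -defH (subsetP (joing_subl _ _)) ?cycle_id.
have yH : y \in H by rewrite -defH (subsetP (joing_subr _ _)) ?cycle_id.
have yR : y \notin <[x]>.
  apply/negP => /cycleP[j yj]; move: xyc; rewrite yj conjgE -expgS expgSr mulKg.
  move=> xx; move/eqP: x2; apply; rewrite expgS expg1 {1}xx mulVg //.
have nRG : G \subset 'N(<[x]>).
  apply/subsetP => g Gg; rewrite inE -cycleJ cycle_subG; apply: key.
    by rewrite memJ_norm ?(subsetP nHG').
  by rewrite -conjXg conjg_eq1.
have iGH : #|G : H| = 4.
  by rewrite -card_quotient // (card_isog isoQ) cardsT card_prod !card_ord.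
have iHR : 1 < #|H : <[x]>|.
  rewrite indexg_gt1; apply/negP => /subsetP /(_ _ yH); exact/negP.
have sRH : <[x]> \subset H by rewrite cycle_subG.
have iGR : 8 <= #|G / <[x]>|.
  rewrite card_quotient // -(Lagrange_index sHG sRH) iGH.
  by rewrite -[8%N]/(4 * 2)%N leq_pmul2l.
have N1 := subsetP nRG _ G1; have N2 := subsetP nRG _ G2.
have N3 := subsetP nRG _ G3; have N4 := subsetP nRG _ G4.
have c1sq : coset <[x]> g1 ^+ 2 = 1 by rewrite -morphX // g1sq morph1.
have c2sq : coset <[x]> g2 ^+ 2 = 1 by rewrite -morphX // g2sq morph1.
have c3sq : coset <[x]> g3 ^+ 2 = 1 by rewrite -morphX // g3sq morph1.
have c4' : coset <[x]> g4 = 1 := coset_id R4.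
have prodc : coset <[x]> g1 * coset <[x]> g2 * coset <[x]> g3 = 1.
  have := congr1 (coset <[x]>) prod1; rewrite !morphM ?groupM //=.
  by rewrite c4' mulg1 morph1.
set c1 := coset <[x]> g1 in c1sq prodc *.
set c2 := coset <[x]> g2 in c2sq prodc *.
set c3 := coset <[x]> g3 in c3sq prodc *.
have c3e : c3 = (c1 * c2)^-1 by rewrite -(mulKg (c1 * c2) c3) prodc mulg1.
have comm : c1 * c2 = c2 * c1.
  by have := inv2 _ _ c3sq; rewrite c3e invgK invMg (inv2 _ _ c1sq) (inv2 _ _ c2sq).
have sub : G / <[x]> \subset <[c1]> <*> <[c2]>.
  rewrite sub_quotient_pre // -genG gen_subG; apply/subsetP => g.
  rewrite !in_setU !in_set1 -!orbA => /or4P[]/eqP->; apply: mem_morphpre => //=.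
  - by rewrite (subsetP (joing_subl _ _)) ?cycle_id.
  - by rewrite (subsetP (joing_subr _ _)) ?cycle_id.
  - rewrite -/c3 c3e groupV groupM //.
      by rewrite (subsetP (joing_subl _ _)) ?cycle_id.
    by rewrite (subsetP (joing_subr _ _)) ?cycle_id.
  - by rewrite c4' group1.
have o1' : #[c1] <= 2 by apply: dvdn_leq => //; rewrite order_dvdn c1sq.
have o2' : #[c2] <= 2 by apply: dvdn_leq => //; rewrite order_dvdn c2sq.
have cQ : #|<[c1]> <*> <[c2]>| <= 4.
  rewrite cent_joinEr; last first.
    by rewrite cycle_subG /= cent_cycle; apply/cent1P; exact: (esym comm).
  apply: (@leq_trans (#|<[c1]> * <[c2]>| * #|<[c1]> :&: <[c2]>|)).
    by rewrite leq_pmulr // cardG_gt0.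
  by rewrite -mul_cardG (leq_mul o1' o2').
have := leq_trans iGR (leq_trans (subset_leq_card sub) cQ).
by [].
Qed.
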